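(* Let $p_1,\dots,p_n\in S^1$ and let $a_1,\dots,a_n$ be nonnegative integers with $a_1+\cdots+a_n$ even. Then the ideal $\mathfrak m_{p_1}^{a_1}\mathfrak m_{p_2}^{a_2}\cdots\mathfrak m_{p_n}^{a_n}$ of $C_{an}(S^1;\mathbf{R})$ is principal.
   Context: $S^1$ is identified with $\mathbf{R}/2\pi\mathbf{Z}$. $C_{an}(S^1;\mathbf{R})$ is the ring (under pointwise operations) of real-valued real-analytic functions on $S^1$, i.e. $2\pi$-periodic real-analytic functions $\mathbf{R}\to\mathbf{R}$. For $p\in S^1$, $\mathfrak m_p=\{f\in C_{an}(S^1;\mathbf{R}): f(p)=0\}$. *)

(* Defs.v *)
From Stdlib Require Import Reals Lra Lia Arith.
Open Scope R_scope.

Definition real_analytic (f : R -> R) : Prop :=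
  forall x0 : R, exists r : R, 0 < r /\ exists c : nat -> R,
    forall x : R, Rabs (x - x0) < r ->
      infinite_sum (fun k => c k * (x - x0) ^ k) (f x).

Definition periodic2pi (f : R -> R) : Prop :=
  forall x : R, f (x + 2 * PI) = f x.

(* The ring C_an(S^1;R), as a subset of R -> R (pointwise operations). *)
Definition Can (f : R -> R) : Prop := real_analytic f /\ periodic2pi f.

(* Maximal ideal m_p = { f in C_an : f(p) = 0 }, p in R representing p mod 2pi. *)
Definition mideal (p : R) (f : R -> R) : Prop := Can f /\ f p = 0.

Inductive idmul (I J : (R -> R) -> Prop) : (R -> R) -> Prop :=
| idmul_gen : forall g h, I g -> J h -> idmul I J (fun x => g x * h x)
| idmul_add : forall f1 f2, idmul I J f1 -> idmul I J f2 ->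
    idmul I J (fun x => f1 x + f2 x).

Fixpoint idpow (I : (R -> R) -> Prop) (n : nat) : (R -> R) -> Prop :=
  match n with
  | O => Can
  | S m => idmul (idpow I m) I
  end.

Fixpoint prod_mpow (n : nat) (p : nat -> R) (a : nat -> nat) : (R -> R) -> Prop :=
  match n with
  | O => Can
  | S m => idmul (prod_mpow m p a) (idpow (mideal (p m)) (a m))
  end.

Fixpoint nsum (n : nat) (a : nat -> nat) : nat :=
  match n with
  | O => 0%nat
  | S m => (nsum m a + a m)%nat
  end.

Definition principal_ideal (I : (R -> R) -> Prop) : Prop :=
  exists g : R -> R, Can g /\
    forall f : R -> R, I f <-> exists h : R -> R, Can h /\ forall x, f x = g x * h x.

(* Main.v *)
Require Import Defs.
From Stdlib Require Import Reals Arith Lra Lia ZArith FunctionalExtensionality.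
From Coquelicot Require Import Coquelicot.
Open Scope R_scope.

Definition LocAn (f : R -> R) (x0 : R) : Prop :=
  exists (c : nat -> R) (r : R), 0 < r /\
    (forall y, Rabs y < r -> Rbar_lt (Rabs y) (CV_radius c)) /\
    (forall x, Rabs (x - x0) < r -> f x = PSeries c (x - x0)).

Lemma bounded_terms (c : nat -> R) (t : R) : ex_pseries c t ->
  exists M, forall n, Rabs (c n * t ^ n) <= M.
Proof.
  intros H.
  assert (H1 : is_lim_seq (fun n => c n * t ^ n) 0).
  { apply ex_series_lim_0. destruct H as [l Hl]. exists l.
    apply is_series_ext with (2 := Hl). intros n. rewrite pow_n_pow.
    unfold scal; simpl. unfold mult; simpl. ring. }
  destruct (filterlim_bounded (fun n => c n * t ^ n)) as [M HM].
  { exists 0. exact H1. }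
  exists M. intros n. exact (HM n).
Qed.

Lemma L_disk (c : nat -> R) (r : R) :
  (forall t, 0 <= t < r -> ex_pseries c t) ->
  forall y, Rabs y < r -> Rbar_lt (Rabs y) (CV_radius c).
Proof.
  intros H y Hy.
  set (t := (Rabs y + r) / 2).
  assert (Ht : 0 <= t < r) by (pose proof (Rabs_pos y); unfold t; lra).
  destruct (bounded_terms c t (H t Ht)) as [M HM].
  destruct (CV_radius_bounded c) as [Hub _].
  assert (Hle : Rbar_le t (CV_radius c)) by (apply Hub; exists M; exact HM).
  apply Rbar_lt_le_trans with t; [simpl; unfold t; lra | exact Hle].
Qed.

Lemma an_to_loc f : real_analytic f -> forall x0, LocAn f x0.
Proof.
  intros H x0. destruct (H x0) as [r [Hr [c Hc]]].
  exists c, r. split; [exact Hr|]. split.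
  - apply L_disk. intros t Ht. exists (f (x0 + t)).
    apply is_pseries_Reals. unfold Pser.
    assert (Hx : Rabs (x0 + t - x0) < r) by (replace (x0 + t - x0) with t by ring; rewrite Rabs_right; lra).
    pose proof (Hc _ Hx) as Hc'. replace (x0 + t - x0) with t in Hc' by ring. exact Hc'.
  - intros x Hx. symmetry. apply is_pseries_unique. apply is_pseries_Reals.
    apply Hc; exact Hx.
Qed.

Lemma loc_to_an f : (forall x0, LocAn f x0) -> real_analytic f.
Proof.
  intros H x0. destruct (H x0) as [c [r [Hr [Hcv Hf]]]].
  exists r. split; [exact Hr|]. exists c. intros x Hx.
  rewrite Hf by exact Hx.
  apply is_pseries_Reals. apply PSeries_correct. apply CV_radius_inside.
  apply Hcv; exact Hx.
Qed.

Lemma LocAn_loc f g x0 : LocAn f x0 ->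
  (exists r, 0 < r /\ forall x, Rabs (x - x0) < r -> g x = f x) -> LocAn g x0.
Proof.
  intros [c [r [Hr [Hcv Hf]]]] [r' [Hr' Hg]].
  exists c, (Rmin r r'). split; [apply Rmin_pos; lra|]. split.
  - intros y Hy. apply Hcv. pose proof (Rmin_l r r'); lra.
  - intros x Hx. pose proof (Rmin_l r r'); pose proof (Rmin_r r r').
    rewrite Hg by lra. apply Hf; lra.
Qed.

Lemma LocAn_plus f g x0 : LocAn f x0 -> LocAn g x0 -> LocAn (fun x => f x + g x) x0.
Proof.
  intros [c [r [Hr [Hcv Hf]]]] [d [s [Hs [Hdv Hg]]]].
  pose proof (Rmin_l r s); pose proof (Rmin_r r s).
  exists (PS_plus c d), (Rmin r s). split; [apply Rmin_pos; lra|]. split.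
  - apply L_disk. intros t Ht. apply ex_pseries_plus; apply CV_radius_inside.
    + apply Hcv. rewrite Rabs_right; lra.
    + apply Hdv. rewrite Rabs_right; lra.
  - intros x Hx. rewrite PSeries_plus.
    + rewrite Hf, Hg by lra. reflexivity.
    + apply CV_radius_inside, Hcv; lra.
    + apply CV_radius_inside, Hdv; lra.
Qed.

Lemma LocAn_mult f g x0 : LocAn f x0 -> LocAn g x0 -> LocAn (fun x => f x * g x) x0.
Proof.
  intros [c [r [Hr [Hcv Hf]]]] [d [s [Hs [Hdv Hg]]]].
  pose proof (Rmin_l r s); pose proof (Rmin_r r s).
  exists (PS_mult c d), (Rmin r s). split; [apply Rmin_pos; lra|]. split.
  - apply L_disk. intros t Ht. apply ex_pseries_mult.
    + apply Hcv. rewrite Rabs_right; lra.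
    + apply Hdv. rewrite Rabs_right; lra.
  - intros x Hx. rewrite PSeries_mult.
    + rewrite Hf, Hg by lra. reflexivity.
    + apply Hcv; lra.
    + apply Hdv; lra.
Qed.

Lemma pseries_e0 (u : nat -> R) (x : R) : (forall n, u (S n) = 0) -> is_pseries u x (u 0%nat).
Proof.
  intros Hu. apply is_pseries_Reals. unfold Pser.
  assert (Hs : forall n, sum_f_R0 (fun k => u k * x ^ k) n = u 0%nat).
  { induction n; simpl. ring. rewrite IHn, Hu. ring. }
  intros eps Heps. exists 0%nat. intros n _. rewrite Hs. unfold Rdist.
  replace (u 0%nat - u 0%nat) with 0 by ring. rewrite Rabs_R0. exact Heps.
Qed.

Lemma LocAn_const k x0 : LocAn (fun _ => k) x0.
Proof.
  set (u := fun n : nat => match n with O => k | S _ => 0 end).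
  exists u, 1. split; [lra|]. split.
  - apply L_disk. intros t _. eexists. apply pseries_e0. reflexivity.
  - intros x _. symmetry. apply is_pseries_unique. apply pseries_e0. reflexivity.
Qed.

Lemma LocAn_entire (c : nat -> R) (F : R -> R) x0 :
  (forall y, is_pseries c y (F y)) -> LocAn (fun x => F (x - x0)) x0.
Proof.
  intros H. exists c, 1. split; [lra|]. split.
  - apply L_disk. intros t _. eexists. apply H.
  - intros x _. symmetry. apply is_pseries_unique. apply H.
Qed.

Lemma LocAn_deriv f x0 : LocAn f x0 -> exists c r, 0 < r /\
    (forall y, Rabs y < r -> Rbar_lt (Rabs y) (CV_radius c)) /\
    (forall x, Rabs (x - x0) < r -> f x = PSeries c (x - x0)) /\ is_derive f x0 (c 1%nat).
Proof.
  intros [c [r [Hr [Hcv Hf]]]]. exists c, r. split; [exact Hr|]. split; [exact Hcv|].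
  split; [exact Hf|].
  apply is_derive_ext_loc with (f := fun x => PSeries c (x - x0)).
  - exists (mkposreal r Hr). intros y Hy. symmetry. apply Hf. exact Hy.
  - assert (H1 : is_derive (PSeries c) (x0 - x0) (PSeries (PS_derive c) 0)).
    { replace (x0 - x0) with 0 by ring. apply is_derive_PSeries.
      apply Hcv. rewrite Rabs_R0; exact Hr. }
    assert (H2 : is_derive (fun x => x - x0) x0 1).
    { auto_derive; auto; ring. }
    pose proof (is_derive_comp (PSeries c) (fun x => x - x0) x0 _ _ H1 H2) as H3.
    rewrite PSeries_0 in H3. unfold PS_derive in H3.
    replace (c 1%nat) with (scal 1 (INR 1 * c 1%nat)). exact H3.
    unfold scal; simpl; unfold mult; simpl. ring.
Qed.

Section Recip.
Variable a : nat -> R.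

Fixpoint bseq (n : nat) : nat -> R :=
  match n with
  | O => fun _ => / a 0%nat
  | S m => fun j => if (j <=? m)%nat then bseq m j
           else - / a 0%nat * sum_f_R0 (fun i => a (S i) * bseq m (m - i)) m
  end.
Definition binv (n : nat) : R := bseq n n.

Lemma bseq_stable : forall n j, (j <= n)%nat -> bseq n j = binv j.
Proof.
  induction n; intros j Hj.
  - assert (j = 0%nat) by lia. subst. reflexivity.
  - destruct (Nat.le_gt_cases j n) as [Hl|Hl].
    + simpl. replace (j <=? n)%nat with true by (symmetry; apply Nat.leb_le; lia).
      apply IHn; exact Hl.
    + assert (j = S n) by lia. subst. reflexivity.
Qed.

Lemma binv_S m : binv (S m) = - / a 0%nat * sum_f_R0 (fun i => a (S i) * binv (m - i)) m.
Proof.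
  unfold binv at 1. cbn [bseq].
  replace (S m <=? m)%nat with false by (symmetry; apply Nat.leb_gt; lia).
  f_equal. apply sum_eq. intros i Hi. f_equal. apply bseq_stable. lia.
Qed.

Lemma PS_mult_binv0 : a 0%nat <> 0 -> PS_mult a binv 0 = 1.
Proof.
  intros H. unfold PS_mult. simpl. unfold binv. simpl. field. exact H.
Qed.

Lemma PS_mult_binvS m : a 0%nat <> 0 -> PS_mult a binv (S m) = 0.
Proof.
  intros H. unfold PS_mult. rewrite decomp_sum by lia. simpl pred.
  rewrite Nat.sub_0_r. rewrite binv_S.
  change (sum_f_R0 (fun i => a (S i) * binv (S m - S i)) m) with (sum_f_R0 (fun i => a (S i) * binv (m - i)) m).
  field. exact H.
Qed.

Lemma T_ident (Rr M : R) : forall m,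
  sum_f_R0 (fun i => Rr ^ (S i) * M ^ (m - i)) m * (M - Rr) = Rr * M ^ (S m) - Rr ^ (S (S m)).
Proof.
  induction m.
  - simpl. ring.
  - rewrite tech5. rewrite Nat.sub_diag.
    rewrite (sum_eq (fun i => Rr ^ S i * M ^ (S m - i)) (fun i => (Rr ^ S i * M ^ (m - i)) * M)).
    + rewrite <- scal_sum.
      rewrite Rmult_plus_distr_r, Rmult_assoc, IHm. simpl. ring.
    + intros i Hi. replace (S m - i)%nat with (S (m - i)) by lia. simpl. ring.
Qed.

Lemma binv_bound (A Rr : R) : a 0%nat <> 0 -> 0 < A -> 0 < Rr ->
  (forall k, Rabs (a k) <= A * Rr ^ k) ->
  forall n, Rabs (binv n) <= / Rabs (a 0%nat) * (Rr + Rr * A / Rabs (a 0%nat)) ^ n.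
Proof.
  intros Ha0 HA HR Hak.
  set (a0 := Rabs (a 0%nat)). assert (Ha0p : 0 < a0) by (apply Rabs_pos_lt; exact Ha0).
  set (M := Rr + Rr * A / a0).
  assert (HMR : M - Rr = Rr * A / a0) by (unfold M; ring).
  assert (HMRp : 0 < M - Rr) by (rewrite HMR; apply Rdiv_lt_0_compat; [apply Rmult_lt_0_compat|]; lra).
  assert (Hstrong : forall n j, (j <= n)%nat -> Rabs (binv j) <= / a0 * M ^ j).
  2:{ intros n. apply (Hstrong n n). lia. }
  induction n; intros j Hj.
  - assert (j = 0%nat) by lia. subst. unfold binv. simpl. rewrite Rabs_inv. unfold a0. lra.
  - destruct (Nat.le_gt_cases j n) as [Hl|Hl]; [apply IHn; exact Hl|].
    assert (j = S n) by lia. subst j. rewrite binv_S.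
    rewrite Rabs_mult, Rabs_Ropp, Rabs_inv. fold a0.
    apply Rle_trans with (/ a0 * sum_f_R0 (fun i => A * Rr ^ S i * (/ a0 * M ^ (n - i))) n).
    + apply Rmult_le_compat_l; [left; apply Rinv_0_lt_compat; exact Ha0p|].
      eapply Rle_trans; [apply sum_f_R0_triangle|]. apply sum_Rle. intros i Hi.
      rewrite Rabs_mult. apply Rmult_le_compat; try apply Rabs_pos.
      * apply Hak.
      * apply IHn. lia.
    + rewrite (sum_eq (fun i => A * Rr ^ S i * (/ a0 * M ^ (n - i)))
                      (fun i => (Rr ^ S i * M ^ (n - i)) * (A / a0))).
      2:{ intros i _. unfold Rdiv. ring. }
      rewrite <- scal_sum.
      assert (HT := T_ident Rr M n).
      set (T := sum_f_R0 (fun i => Rr ^ S i * M ^ (n - i)) n) in *.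
      assert (HT2 : T <= Rr * M ^ S n / (M - Rr)).
      { apply Rmult_le_reg_r with (M - Rr); [exact HMRp|].
        unfold Rdiv. rewrite Rmult_assoc, Rinv_l by lra. rewrite HT.
        assert (0 < Rr ^ S (S n)) by (apply pow_lt; lra). lra. }
      rewrite HMR in HT2.
      apply Rle_trans with (/ a0 * (A / a0 * (Rr * M ^ S n / (Rr * A / a0)))).
      * apply Rmult_le_compat_l; [left; apply Rinv_0_lt_compat; exact Ha0p|].
        apply Rmult_le_compat_l; [left; apply Rdiv_lt_0_compat; lra|]. exact HT2.
      * right. field. lra.
Qed.

End Recip.

Lemma LocAn_inv f x0 : LocAn f x0 -> f x0 <> 0 ->
  exists g, LocAn g x0 /\ exists r, 0 < r /\ forall x, Rabs (x - x0) < r -> f x * g x = 1.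
Proof.
  intros [c [r [Hr [Hcv Hf]]]] Hf0.
  assert (Hc0 : f x0 = c 0%nat).
  { rewrite Hf. replace (x0 - x0) with 0 by ring. apply PSeries_0.
    replace (x0 - x0) with 0 by ring. rewrite Rabs_R0. exact Hr. }
  assert (Hc0' : c 0%nat <> 0) by (rewrite <- Hc0; exact Hf0).
  set (rho := r / 2).
  assert (Hrho : 0 < rho) by (unfold rho; lra).
  destruct (bounded_terms c rho) as [A0 HA0].
  { apply CV_radius_inside. apply Hcv. rewrite Rabs_right; unfold rho; lra. }
  assert (HA0p : 0 <= A0) by (eapply Rle_trans; [apply Rabs_pos| apply (HA0 0%nat)]).
  set (A := A0 + 1). set (Rr := / rho).
  assert (HRr : 0 < Rr) by (apply Rinv_0_lt_compat; exact Hrho).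
  assert (Hak : forall k, Rabs (c k) <= A * Rr ^ k).
  { intros k. specialize (HA0 k). rewrite Rabs_mult, <- RPow_abs, (Rabs_right rho) in HA0 by lra.
    assert (Hpk : 0 < rho ^ k) by (apply pow_lt; exact Hrho).
    unfold Rr. rewrite pow_inv.
    apply Rmult_le_reg_r with (rho ^ k); [exact Hpk|].
    rewrite Rmult_assoc, Rinv_l by lra. unfold A. lra. }
  pose proof (binv_bound c A Rr Hc0' ltac:(unfold A; lra) HRr Hak) as Hb.
  set (a0 := Rabs (c 0%nat)) in Hb.
  assert (Ha0p : 0 < a0) by (apply Rabs_pos_lt; exact Hc0').
  set (M := Rr + Rr * A / a0) in Hb.
  assert (HM : 0 < M).
  { unfold M. assert (0 < Rr * A / a0) by (apply Rdiv_lt_0_compat; [apply Rmult_lt_0_compat; unfold A|]; lra). lra. }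
  assert (Hcvb : Rbar_le (/ M) (CV_radius (binv c))).
  { destruct (CV_radius_bounded (binv c)) as [Hub _]. apply Hub.
    exists (/ a0). intros n. rewrite Rabs_mult, <- RPow_abs, (Rabs_right (/ M)).
    2:{ left; apply Rinv_0_lt_compat; exact HM. }
    apply Rle_trans with (/ a0 * M ^ n * (/ M) ^ n).
    - apply Rmult_le_compat_r; [apply pow_le; left; apply Rinv_0_lt_compat; exact HM|]. apply Hb.
    - right. rewrite pow_inv. field. split; [lra|]. apply pow_nonzero. lra. }
  set (r' := Rmin rho (/ M)).
  assert (Hr'1 : r' <= rho) by apply Rmin_l.
  assert (Hr'2 : r' <= / M) by apply Rmin_r.
  assert (Hr' : 0 < r') by (apply Rmin_pos; [exact Hrho| apply Rinv_0_lt_compat; exact HM]).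
  exists (fun x => PSeries (binv c) (x - x0)). split.
  - exists (binv c), r'. split; [exact Hr'|]. split; [|intros; reflexivity].
    intros y Hy. apply Rbar_lt_le_trans with (/ M); [simpl; lra| exact Hcvb].
  - exists r'. split; [exact Hr'|]. intros x Hx.
    rewrite Hf by (unfold rho in Hr'1; lra).
    rewrite <- PSeries_mult.
    + rewrite (is_pseries_unique _ _ _ (pseries_e0 (PS_mult c (binv c)) (x - x0) (fun m => PS_mult_binvS c m Hc0'))).
      apply PS_mult_binv0. exact Hc0'.
    + apply Hcv. unfold rho in Hr'1; lra.
    + apply Rbar_lt_le_trans with (/ M); [simpl; lra| exact Hcvb].
Qed.

Lemma even_double i : Nat.even (2 * i) = true.
Proof. apply Nat.even_spec. exists i. reflexivity. Qed.
Lemma even_sdouble i : Nat.even (S (2 * i)) = false.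
Proof. rewrite Nat.even_succ, <- Nat.negb_even, even_double. reflexivity. Qed.

Lemma div2_cases n : (n = 2 * Nat.div2 n /\ Nat.even n = true)%nat \/ (n = S (2 * Nat.div2 n) /\ Nat.even n = false)%nat.
Proof.
  pose proof (Nat.div2_odd n) as H. destruct (Nat.odd n) eqn:E; simpl in H.
  - right. split; [lia|]. replace n with (S (2 * Nat.div2 n)) by lia. apply even_sdouble.
  - left. split; [lia|]. replace n with (2 * Nat.div2 n)%nat by lia. apply even_double.
Qed.

Lemma interleave_even u l : infinite_sum u l ->
  infinite_sum (fun n => if Nat.even n then u (Nat.div2 n) else 0) l.
Proof.
  intros H. set (v := fun n => if Nat.even n then u (Nat.div2 n) else 0).
  assert (Hp : forall i, sum_f_R0 v (2 * i) = sum_f_R0 u i /\ sum_f_R0 v (S (2 * i)) = sum_f_R0 u i).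
  { induction i.
    - simpl. unfold v. simpl. split; ring.
    - destruct IHi as [_ IH2].
      assert (E1 : sum_f_R0 v (2 * S i) = sum_f_R0 u (S i)).
      { replace (2 * S i)%nat with (S (S (2 * i))) by lia. rewrite tech5, IH2, tech5.
        f_equal. unfold v. replace (S (S (2 * i))) with (2 * S i)%nat by lia.
        rewrite even_double, Nat.div2_double. reflexivity. }
      split; [exact E1|]. rewrite tech5, E1. unfold v. rewrite even_sdouble. ring. }
  intros eps Heps. destruct (H eps Heps) as [N HN]. exists (2 * N)%nat.
  intros n Hn. destruct (div2_cases n) as [[E _]|[E _]].
  - rewrite E, (proj1 (Hp _)). apply HN. lia.
  - rewrite E, (proj2 (Hp _)). apply HN. lia.
Qed.

Lemma interleave_odd u l : infinite_sum u l ->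
  infinite_sum (fun n => if Nat.even n then 0 else u (Nat.div2 n)) l.
Proof.
  intros H. set (v := fun n => if Nat.even n then 0 else u (Nat.div2 n)).
  assert (Hp : forall i, sum_f_R0 v (S (2 * i)) = sum_f_R0 u i /\ sum_f_R0 v (2 * S i) = sum_f_R0 u i).
  { induction i.
    - simpl. unfold v. simpl. split; ring.
    - destruct IHi as [_ IH2].
      assert (E1 : sum_f_R0 v (S (2 * S i)) = sum_f_R0 u (S i)).
      { rewrite tech5, IH2, tech5. f_equal. unfold v.
        rewrite even_sdouble, Nat.div2_succ_double. reflexivity. }
      split; [exact E1|]. replace (2 * S (S i))%nat with (S (S (2 * S i))) by lia.
      rewrite tech5, E1. unfold v. replace (S (S (2 * S i))) with (2 * S (S i))%nat by lia.
      rewrite even_double. ring. }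
  intros eps Heps. destruct (H eps Heps) as [N HN]. exists (S (2 * N)).
  intros n Hn. destruct (div2_cases n) as [[E _]|[E _]].
  - destruct (Nat.div2 n) as [|k] eqn:Ek; [lia|].
    rewrite E, (proj2 (Hp _)). apply HN. lia.
  - rewrite E, (proj1 (Hp _)). apply HN. lia.
Qed.

Definition ccoef (n : nat) : R := if Nat.even n then cos_n (Nat.div2 n) * (/ 2) ^ n else 0.
Definition scoef (n : nat) : R := if Nat.even n then 0 else sin_n (Nat.div2 n) * (/ 2) ^ n.

Lemma cos_series y : is_pseries ccoef y (cos (y / 2)).
Proof.
  set (z := y / 2). unfold cos. destruct (exist_cos (Rsqr z)) as [a Ha].
  unfold cos_in in Ha. apply interleave_even in Ha.
  apply is_pseries_Reals. unfold Pser. apply is_series_Reals. apply is_series_Reals in Ha.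
  apply is_series_ext with (2 := Ha). intros n. unfold ccoef.
  destruct (div2_cases n) as [[E Ee]|[E Ee]]; rewrite Ee. 2:{ simpl; ring. }
  set (k := Nat.div2 n) in *. rewrite E. rewrite pow_mult. unfold z, Rsqr.
  rewrite pow_mult, Rmult_assoc, <- Rpow_mult_distr. do 2 f_equal. simpl. field.
Qed.

Lemma sin_series y : is_pseries scoef y (sin (y / 2)).
Proof.
  set (z := y / 2). unfold sin. destruct (exist_sin (Rsqr z)) as [a Ha].
  unfold sin_in in Ha. apply is_series_Reals in Ha.
  apply (is_series_scal z) in Ha. apply is_series_Reals in Ha.
  apply interleave_odd in Ha.
  apply is_pseries_Reals. unfold Pser. apply is_series_Reals. apply is_series_Reals in Ha.
  apply is_series_ext with (2 := Ha). intros n. unfold scoef.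
  destruct (div2_cases n) as [[E Ee]|[E Ee]]; rewrite Ee. { simpl; ring. }
  set (k := Nat.div2 n) in *. rewrite E. unfold scal; simpl; unfold mult; simpl.
  replace (k + (k + 0))%nat with (2 * k)%nat by lia. rewrite !pow_mult.
  assert (Hz : z² = (/ 2) ^ 2 * y ^ 2) by (unfold z, Rsqr; simpl; field).
  rewrite Hz, Rpow_mult_distr. unfold z. field.
Qed.

Definition sfun (p x : R) : R := sin ((x - p) / 2).


Lemma sfun_LocAn p x0 : LocAn (sfun p) x0.
Proof.
  set (u0 := (x0 - p) / 2).
  apply LocAn_loc with (f := fun x => sin u0 * cos ((x - x0) / 2) + cos u0 * sin ((x - x0) / 2)).
  - apply LocAn_plus; apply LocAn_mult; try apply LocAn_const.
    + apply (LocAn_entire ccoef (fun y => cos (y / 2))). apply cos_series.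
    + apply (LocAn_entire scoef (fun y => sin (y / 2))). apply sin_series.
  - exists 1. split; [lra|]. intros x _. unfold sfun. rewrite <- sin_plus. f_equal. unfold u0. field.
Qed.

Lemma LocAn_div f x0 : LocAn f x0 -> f x0 = 0 ->
  exists F, LocAn F x0 /\ (exists r, 0 < r /\ forall x, Rabs (x - x0) < r -> f x = (x - x0) * F x)
    /\ is_derive f x0 (F x0).
Proof.
  intros H Hz. destruct (LocAn_deriv f x0 H) as [c [r [Hr [Hcv [Hf Hd]]]]].
  assert (Hc0 : c 0%nat = 0).
  { assert (Hx0 : f x0 = PSeries c (x0 - x0)).
    { apply Hf. replace (x0 - x0) with 0 by ring. rewrite Rabs_R0. exact Hr. }
    replace (x0 - x0) with 0 in Hx0 by ring. rewrite PSeries_0 in Hx0. lra. }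
  exists (fun x => PSeries (PS_decr_1 c) (x - x0)). split; [|split].
  - exists (PS_decr_1 c), r. split; [exact Hr|]. split; [|intros; reflexivity].
    intros y Hy. rewrite CV_radius_decr_1. apply Hcv. exact Hy.
  - exists r. split; [exact Hr|]. intros x Hx. rewrite Hf by exact Hx.
    apply PSeries_decr_1_aux. exact Hc0.
  - replace (x0 - x0) with 0 by ring. rewrite PSeries_0. exact Hd.
Qed.

Lemma LocAn_ex_derive f x : LocAn f x -> ex_derive f x.
Proof.
  intros H. destruct (LocAn_deriv f x H) as [c [r [_ [_ [_ Hd]]]]]. eexists. exact Hd.
Qed.

Lemma per_nat f : periodic2pi f -> forall n y, f (y + INR n * (2 * PI)) = f y.
Proof.
  intros Hp. induction n; intros y.
  - simpl. f_equal. ring.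
  - rewrite S_INR. replace (y + (INR n + 1) * (2 * PI)) with ((y + INR n * (2 * PI)) + 2 * PI) by ring.
    rewrite Hp. apply IHn.
Qed.

Lemma per_Z f : periodic2pi f -> forall (k : Z) y, f (y + IZR k * (2 * PI)) = f y.
Proof.
  intros Hp k y. destruct (Z_le_gt_dec 0 k) as [Hk|Hk].
  - rewrite <- (Z2Nat.id k) by exact Hk. rewrite <- INR_IZR_INZ. apply per_nat; exact Hp.
  - replace k with (- Z.of_nat (Z.to_nat (- k)))%Z by lia. rewrite opp_IZR, <- INR_IZR_INZ.
    set (n := Z.to_nat (-k)).
    rewrite <- (per_nat f Hp n (y + - INR n * (2 * PI))). f_equal. ring.
Qed.

Lemma sfun_shift p x : sfun p (x + 2 * PI) = - sfun p x.
Proof. unfold sfun. rewrite <- neg_sin. f_equal. field. Qed.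

Lemma cos_shift p x : cos ((x + 2 * PI - p) / 2) = - cos ((x - p) / 2).
Proof. rewrite <- neg_cos. f_equal. field. Qed.

Lemma sfun_zero_f p f x : periodic2pi f -> f p = 0 -> sfun p x = 0 -> f x = 0.
Proof.
  intros Hp Hfp Hs. unfold sfun in Hs. apply sin_eq_0_0 in Hs. destruct Hs as [k Hk].
  replace x with (p + IZR k * (2 * PI)) by lra. rewrite per_Z by exact Hp. exact Hfp.
Qed.

Lemma sfun_zero_cos p x : sfun p x = 0 -> cos ((x - p) / 2) <> 0.
Proof.
  unfold sfun. intros Hs Hc. pose proof (sin2_cos2 ((x - p) / 2)) as H.
  rewrite Hs, Hc in H. unfold Rsqr in H. lra.
Qed.

Lemma Derive_per f x : periodic2pi f -> (forall x0, LocAn f x0) -> Derive f (x + 2 * PI) = Derive f x.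
Proof.
  intros Hp Ha.
  assert (H1 : Derive (fun y => f (y + 2 * PI)) x = Derive (fun y => y + 2 * PI) x * Derive f (x + 2 * PI)).
  { apply (Derive_comp f (fun y => y + 2 * PI) x). apply LocAn_ex_derive, Ha. auto_derive. auto. }
  assert (H2 : Derive (fun y => y + 2 * PI) x = 1).
  { apply is_derive_unique. auto_derive; auto. }
  rewrite H2, Rmult_1_l in H1. rewrite <- H1. apply Derive_ext. intros t. apply Hp.
Qed.

Lemma sfun_derive p x : is_derive (sfun p) x (cos ((x - p) / 2) / 2).
Proof. unfold sfun. auto_derive; auto. unfold Rminus, Rdiv. ring. Qed.

Definition kdiv (p : R) (f : R -> R) (x : R) : R :=
  if Req_EM_T (sfun p x) 0 then 2 * Derive f x / cos ((x - p) / 2) else f x / sfun p x.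

Lemma divide_s p f : (forall x0, LocAn f x0) -> periodic2pi f -> f p = 0 ->
  (forall x0, LocAn (kdiv p f) x0) /\ (forall x, kdiv p f (x + 2 * PI) = - kdiv p f x)
  /\ (forall x, f x = sfun p x * kdiv p f x).
Proof.
  intros Ha Hp Hfp. split; [|split].
  - intros x0. destruct (Req_EM_T (sfun p x0) 0) as [Hz|Hnz].
    +
      destruct (LocAn_div f x0 (Ha x0) (sfun_zero_f p f x0 Hp Hfp Hz)) as [Ff [HFf [[rf [Hrf Hff]] Hdf]]].
      destruct (LocAn_div (sfun p) x0 (sfun_LocAn p x0) Hz) as [Fs [HFs [[rs [Hrs Hfs]] Hds]]].
      assert (HFs0 : Fs x0 = cos ((x0 - p) / 2) / 2).
      { rewrite <- (is_derive_unique _ _ _ Hds). apply is_derive_unique, sfun_derive. }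
      assert (Hcos := sfun_zero_cos p x0 Hz).
      assert (HFs0' : Fs x0 <> 0) by (rewrite HFs0; intro; apply Hcos; lra).
      destruct (LocAn_inv Fs x0 HFs HFs0') as [g [Hg [rg [Hrg Hgs]]]].
      apply LocAn_loc with (f := fun x => Ff x * g x); [apply LocAn_mult; assumption|].
      exists (Rmin rf (Rmin rs rg)). split; [repeat apply Rmin_pos; assumption|].
      intros x Hx.
      pose proof (Rmin_l rf (Rmin rs rg)); pose proof (Rmin_r rf (Rmin rs rg));
      pose proof (Rmin_l rs rg); pose proof (Rmin_r rs rg).
      assert (Hg1 : Fs x * g x = 1) by (apply Hgs; lra).
      unfold kdiv. destruct (Req_EM_T x x0) as [Hxe|Hxne].
      * subst x. destruct (Req_EM_T (sfun p x0) 0) as [_|Hc]; [|contradiction].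
        rewrite (is_derive_unique _ _ _ Hdf).
        assert (Hg0 : g x0 = 2 / cos ((x0 - p) / 2)).
        { rewrite HFs0 in Hg1. field_simplify_eq; [|exact Hcos]. lra. }
        rewrite Hg0. field. exact Hcos.
      * assert (Hsx : sfun p x = (x - x0) * Fs x) by (apply Hfs; lra).
        assert (Hxx : x - x0 <> 0) by lra.
        assert (HFsx : Fs x <> 0) by (intro Hq; rewrite Hq in Hg1; lra).
        destruct (Req_EM_T (sfun p x) 0) as [Hc|_].
        { rewrite Hsx in Hc. apply Rmult_integral in Hc. destruct Hc; contradiction. }
        rewrite Hsx, (Hff x) by lra.
        replace (g x) with (/ Fs x) by (field_simplify_eq; [lra|exact HFsx]).
        field. split; assumption.
    +
      destruct (LocAn_inv (sfun p) x0 (sfun_LocAn p x0) Hnz) as [g [Hg [rg [Hrg Hgs]]]].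
      apply LocAn_loc with (f := fun x => f x * g x); [apply LocAn_mult; [apply Ha|exact Hg]|].
      exists rg. split; [exact Hrg|]. intros x Hx. specialize (Hgs x Hx).
      unfold kdiv. destruct (Req_EM_T (sfun p x) 0) as [Hc|Hc].
      * rewrite Hc in Hgs. lra.
      * replace (g x) with (/ sfun p x) by (field_simplify_eq; [lra|exact Hc]). field. exact Hc.
  - intros x. unfold kdiv. rewrite sfun_shift.
    destruct (Req_EM_T (- sfun p x) 0) as [H1|H1]; destruct (Req_EM_T (sfun p x) 0) as [H2|H2];
      try (exfalso; lra).
    + rewrite cos_shift, Derive_per by assumption. field. apply sfun_zero_cos. exact H2.
    + rewrite Hp. field. exact H2.
  - intros x. unfold kdiv. destruct (Req_EM_T (sfun p x) 0) as [H1|H1].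
    + rewrite H1, (sfun_zero_f p f x Hp Hfp H1). ring.
    + field. exact H1.
Qed.

Definition AN (f : R -> R) : Prop := forall x0, LocAn f x0.

Lemma AN_mult f g : AN f -> AN g -> AN (fun x => f x * g x).
Proof. intros Hf Hg x0. apply LocAn_mult; auto. Qed.
Lemma AN_plus f g : AN f -> AN g -> AN (fun x => f x + g x).
Proof. intros Hf Hg x0. apply LocAn_plus; auto. Qed.
Lemma AN_const k : AN (fun _ => k).
Proof. intros x0. apply LocAn_const. Qed.
Lemma AN_ext f g : AN f -> (forall x, g x = f x) -> AN g.
Proof. intros Hf He x0. apply LocAn_loc with f; [apply Hf|]. exists 1. split; [lra|]. intros; apply He. Qed.
Lemma AN_sfun p : AN (sfun p).
Proof. intros x0. apply sfun_LocAn. Qed.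
Lemma AN_pow f n : AN f -> AN (fun x => f x ^ n).
Proof.
  intros Hf. induction n.
  - apply AN_ext with (fun _ => 1); [apply AN_const|]. intros; reflexivity.
  - apply AN_ext with (fun x => f x * f x ^ n); [apply AN_mult; auto|]. intros; reflexivity.
Qed.

Definition J (N : nat) (G : R -> R) (f : R -> R) : Prop :=
  exists h, AN h /\ (forall x, h (x + 2 * PI) = (-1) ^ N * h x) /\ (forall x, f x = G x * h x).

Lemma idmul_mono (I I' K K' : (R -> R) -> Prop) :
  (forall f, I f -> I' f) -> (forall f, K f -> K' f) -> forall f, idmul I K f -> idmul I' K' f.
Proof.
  intros HI HK f H. induction H.
  - apply idmul_gen; auto.
  - apply idmul_add; auto.
Qed.

Lemma idmul_iff (I I' K K' : (R -> R) -> Prop) :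
  (forall f, I f <-> I' f) -> (forall f, K f <-> K' f) -> forall f, idmul I K f <-> idmul I' K' f.
Proof.
  intros HI HK f. split; apply idmul_mono; intros g; first [apply HI | apply HK].
Qed.

Lemma J_ext N G G' f : (forall x, G x = G' x) -> (J N G f <-> J N G' f).
Proof.
  intros He. split; intros [h [Hh [Hp Hf]]]; exists h; split; auto; split; auto; intros x;
  rewrite Hf; [rewrite He|rewrite <- He]; reflexivity.
Qed.

Lemma cs_identity x : sfun (- PI) x * sfun (- PI) x + sfun 0 x * sfun 0 x = 1.
Proof.
  unfold sfun. replace ((x - - PI) / 2) with ((x - 0) / 2 + PI / 2) by field.
  rewrite sin_plus, sin_PI2, cos_PI2. pose proof (sin2_cos2 ((x - 0) / 2)) as H.
  unfold Rsqr in H. lra.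
Qed.

Lemma J_mul N1 N2 G1 G2 f :
  idmul (J N1 G1) (J N2 G2) f <-> J (N1 + N2) (fun x => G1 x * G2 x) f.
Proof.
  split.
  - intros H. induction H as [g h [h1 [Ha1 [Hp1 Hf1]]] [h2 [Ha2 [Hp2 Hf2]]] | f1 f2 _ [h1 [Ha1 [Hp1 Hf1]]] _ [h2 [Ha2 [Hp2 Hf2]]]].
    + exists (fun x => h1 x * h2 x). split; [apply AN_mult; auto|]. split.
      * intros x. rewrite Hp1, Hp2, pow_add. ring.
      * intros x. rewrite Hf1, Hf2. ring.
    + exists (fun x => h1 x + h2 x). split; [apply AN_plus; auto|]. split.
      * intros x. rewrite Hp1, Hp2. ring.
      * intros x. rewrite Hf1, Hf2. ring.
  - intros [h [Ha [Hp Hf]]].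
    destruct (Nat.Even_or_Odd N2) as [[m2 E2]|[m2 E2]].
    + assert (Hf' : f = fun x => (G1 x * h x) * (G2 x * 1)).
      { apply functional_extensionality. intros x. rewrite Hf. ring. }
      rewrite Hf'. apply idmul_gen.
      * exists h. split; [auto|]. split; [|intros; reflexivity].
        intros x. rewrite Hp, pow_add, E2, pow_1_even. ring.
      * exists (fun _ => 1). split; [apply AN_const|]. split; [|intros; reflexivity].
        intros x. rewrite E2, pow_1_even. ring.
    + destruct (Nat.Even_or_Odd N1) as [[m1 E1]|[m1 E1]].
      * assert (Hf' : f = fun x => (G1 x * 1) * (G2 x * h x)).
        { apply functional_extensionality. intros x. rewrite Hf. ring. }
        rewrite Hf'. apply idmul_gen.
        -- exists (fun _ => 1). split; [apply AN_const|]. split; [|intros; reflexivity].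
           intros x. rewrite E1, pow_1_even. ring.
        -- exists h. split; [auto|]. split; [|intros; reflexivity].
           intros x. rewrite Hp, pow_add, E1, pow_1_even. ring.
      * set (c := sfun (- PI)). set (s := sfun 0).
        assert (Hf' : f = fun x => (fun y => (G1 y * (h y * c y)) * (G2 y * c y)) x
                                 + (fun y => (G1 y * (h y * s y)) * (G2 y * s y)) x).
        { apply functional_extensionality. intros x. rewrite Hf.
          pose proof (cs_identity x). fold c s in H.
          transitivity (G1 x * G2 x * h x * (c x * c x + s x * s x)); [rewrite H; ring|ring]. }
        assert (HN : (-1) ^ (N1 + N2) = 1).
        { replace (N1 + N2)%nat with (2 * (m1 + m2 + 1))%nat by lia. apply pow_1_even. }
        assert (HN1 : (-1) ^ N1 = -1) by (rewrite E1, Nat.add_1_r; apply pow_1_odd).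
        assert (HN2 : (-1) ^ N2 = -1) by (rewrite E2, Nat.add_1_r; apply pow_1_odd).
        rewrite Hf'. apply idmul_add; apply idmul_gen.
        -- exists (fun y => h y * c y). split; [apply AN_mult; [auto|apply AN_sfun]|].
           split; [|intros; reflexivity]. intros x. unfold c. rewrite Hp, HN, HN1, sfun_shift. ring.
        -- exists c. split; [apply AN_sfun|]. split; [|intros; reflexivity].
           intros x. unfold c. rewrite HN2, sfun_shift. ring.
        -- exists (fun y => h y * s y). split; [apply AN_mult; [auto|apply AN_sfun]|].
           split; [|intros; reflexivity]. intros x. unfold s. rewrite Hp, HN, HN1, sfun_shift. ring.
        -- exists s. split; [apply AN_sfun|]. split; [|intros; reflexivity].
           intros x. unfold s. rewrite HN2, sfun_shift. ring.
Qed.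

Lemma Can_J0 f : Can f <-> J 0 (fun _ => 1) f.
Proof.
  split.
  - intros [Ha Hp]. exists f. split; [exact (an_to_loc _ Ha)|]. split.
    + intros x. rewrite Hp. simpl. ring.
    + intros x. ring.
  - intros [h [Ha [Hp Hf]]]. split.
    + apply loc_to_an. apply AN_ext with h; [exact Ha|]. intros x. rewrite Hf. ring.
    + intros x. rewrite !Hf, Hp. simpl. ring.
Qed.

Lemma mideal_J1 p f : mideal p f <-> J 1 (sfun p) f.
Proof.
  split.
  - intros [[Ha Hp] Hfp].
    destruct (divide_s p f (an_to_loc f Ha) Hp Hfp) as [Hk [Hkp Hkf]].
    exists (kdiv p f). split; [exact Hk|]. split; [|exact Hkf].
    intros x. rewrite Hkp. simpl. ring.
  - intros [h [Ha [Hp Hf]]]. split; [split|].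
    + apply loc_to_an. apply AN_ext with (fun x => sfun p x * h x); [apply AN_mult; [apply AN_sfun|exact Ha]|].
      exact Hf.
    + intros x. rewrite !Hf, Hp, sfun_shift. simpl. ring.
    + rewrite Hf. unfold sfun. replace ((p - p) / 2) with 0 by field. rewrite sin_0. ring.
Qed.

Lemma idpow_J p : forall a f, idpow (mideal p) a f <-> J a (fun x => sfun p x ^ a) f.
Proof.
  induction a; intros f.
  - simpl. apply Can_J0.
  - simpl idpow.
    rewrite (idmul_iff _ (J a (fun x => sfun p x ^ a)) _ (J 1 (sfun p)) IHa (mideal_J1 p)).
    rewrite J_mul. rewrite Nat.add_1_r. apply J_ext. intros x. simpl. ring.
Qed.

Fixpoint Gp (n : nat) (p : nat -> R) (a : nat -> nat) (x : R) : R :=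
  match n with
  | O => 1
  | S m => Gp m p a x * sfun (p m) x ^ (a m)
  end.

Lemma prod_J n p a : forall f, prod_mpow n p a f <-> J (nsum n a) (Gp n p a) f.
Proof.
  induction n; intros f.
  - simpl. apply Can_J0.
  - simpl prod_mpow.
    rewrite (idmul_iff _ (J (nsum n a) (Gp n p a)) _ (J (a n) (fun x => sfun (p n) x ^ a n)) IHn (idpow_J (p n) (a n))).
    rewrite J_mul. simpl. reflexivity.
Qed.

Lemma Gp_AN n p a : AN (Gp n p a).
Proof.
  induction n; simpl.
  - apply AN_const.
  - apply AN_mult; [exact IHn| apply AN_pow, AN_sfun].
Qed.

Lemma Gp_shift n p a x : Gp n p a (x + 2 * PI) = (-1) ^ (nsum n a) * Gp n p a x.
Proof.
  induction n; simpl.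
  - ring.
  - rewrite IHn, sfun_shift, pow_add.
    replace (- sfun (p n) x) with ((-1) * sfun (p n) x) by ring. rewrite Rpow_mult_distr. ring.
Qed.

Theorem corollary1 (n : nat) (p : nat -> R) (a : nat -> nat) :
  Nat.Even (nsum n a) -> principal_ideal (prod_mpow n p a).
Proof.
  intros [m Hm]. assert (HN : (-1) ^ (nsum n a) = 1) by (rewrite Hm; apply pow_1_even).
  exists (Gp n p a). split.
  - split; [apply loc_to_an, Gp_AN|]. intros x. rewrite Gp_shift, HN. ring.
  - intros f. rewrite prod_J. split.
    + intros [h [Ha [Hp Hf]]]. exists h. split; [|exact Hf]. split.
      * apply loc_to_an; exact Ha.
      * intros x. rewrite Hp, HN. ring.
    + intros [h [[Ha Hp] Hf]]. exists h. split; [exact (an_to_loc _ Ha)|]. split; [|exact Hf].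
      intros x. rewrite Hp, HN. ring.
Qed.
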